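(* Let $\sigma : \mathcal{S} \rightarrow \mathcal{A}$ and $\tau : \mathcal{T} \rightarrow \mathcal{A}^{\perp}$ be courteous strong-receptive pre-$\sim$-strategies. Then, forgetting polarities, the pullback of $\sigma$ and $\tau$ exists in the category of event structures with symmetry, has as base event structure the pullback $S \circledast T$ (in event structures) of $\sigma$ and $\tau$, and has as symmetry the pullback $\tilde{S}\circledast \tilde{T}$ (in event structures) of $\tilde\sigma$ and $\tilde\tau$, with the obvious projections.
   Context: $e \rightarrow e'$ denotes immediate causal dependency ($e<e'$ with nothing strictly between). An event structure with symmetry is an event structure $A$ with an event structure $\tilde A$ and open (rigid, with configuration extension property) jointly monic maps $l_A,r_A:\tilde A\to A$ forming an equivalence relation; maps must lift to symmetries ($\tilde f:\tilde A\to\tilde B$). The category of event structures with symmetry does not have all pullbacks in general; pullbacks of plain event structures always exist. An essp adds polarities. A pre-$\sim$-strategy is a map of essps; it is courteous if $s_1 \rightarrow s_2$ with $\mathrm{pol}(s_1)=+$ or $\mathrm{pol}(s_2)=-$ implies $\sigma s_1 \rightarrow \sigma s_2$, and strong-receptive if whenever $\theta\in\mathbb{S}_S$ and $\sigma\theta$ extends in the isomorphism family of the game by a pair $(a_1,a_2)$ of negative events, there is a unique extension $\theta\cup\{(s_1,s_2)\}\in\mathbb{S}_S$ with $\sigma s_i=a_i$. *)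

(* Defs.v *)
From Stdlib Require Import List.
Set Implicit Arguments.
Unset Strict Implicit.

Definition finite {E : Type} (X : E -> Prop) : Prop :=
  exists l : list E, forall e, X e <-> In e l.

Definition subset {E : Type} (X Y : E -> Prop) : Prop := forall e, X e -> Y e.
Definition same_set {E : Type} (X Y : E -> Prop) : Prop := forall e, X e <-> Y e.

Record ES : Type := mkES {
  ev : Type;
  le : ev -> ev -> Prop;
  con : (ev -> Prop) -> Prop;
  le_refl : forall e, le e e;
  le_trans : forall e1 e2 e3, le e1 e2 -> le e2 e3 -> le e1 e3;
  le_antisym : forall e1 e2, le e1 e2 -> le e2 e1 -> e1 = e2;
  le_fin : forall e, finite (fun e' => le e' e);
  con_fin : forall X, con X -> finite X;
  con_empty : con (fun _ => False);
  con_single : forall e, con (fun e' => e' = e);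
  con_sub : forall X Y, con X -> subset Y X -> con Y;
  con_down : forall X e e', con X -> X e' -> le e e' -> con (fun x => X x \/ x = e)
}.

Definition lt (E : ES) (e e' : ev E) : Prop := le e e' /\ e <> e'.
Definition imm (E : ES) (e e' : ev E) : Prop :=
  lt e e' /\ ~ (exists e'', lt e e'' /\ lt e'' e').

Definition config (E : ES) (x : ev E -> Prop) : Prop :=
  finite x /\ con x /\ (forall e e', x e' -> le e e' -> x e).

Definition image {A B : Type} (f : A -> B) (x : A -> Prop) : B -> Prop :=
  fun b => exists a, x a /\ f a = b.

Record esmap (A B : ES) : Type := mkEsmap {
  fn : ev A -> ev B;
  fn_conf : forall x, config x -> config (image fn x);
  fn_inj : forall x, config x -> forall e1 e2, x e1 -> x e2 -> fn e1 = fn e2 -> e1 = e2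
}.
Coercion fn : esmap >-> Funclass.

Definition rigid (A B : ES) (f : esmap A B) : Prop :=
  forall e e', le e e' -> le (f e) (f e').
Definition open_map (A B : ES) (f : esmap A B) : Prop :=
  rigid f /\
  forall (x : ev A -> Prop) (y' : ev B -> Prop), config x -> config y' ->
    subset (image f x) y' ->
    exists y, config y /\ subset x y /\ same_set (image f y) y'.

Definition jointly_monic (A At : ES) (l r : esmap At A) : Prop :=
  forall (C : ES) (g h : esmap C At),
    (forall c, l (g c) = l (h c)) -> (forall c, r (g c) = r (h c)) ->
    forall c, g c = h c.

(** The pair (l, r) forms an (internal) equivalence relation: for every
    object C, the relation on maps C -> A induced by (l, r) is an
    equivalence relation. *)
Definition related (A At : ES) (l r : esmap At A) (C : ES) (f g : esmap C A) : Prop :=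
  exists k : esmap C At, forall c, l (k c) = f c /\ r (k c) = g c.
Definition equiv_rel (A At : ES) (l r : esmap At A) : Prop :=
  forall C : ES,
    (forall f : esmap C A, related l r f f) /\
    (forall f g : esmap C A, related l r f g -> related l r g f) /\
    (forall f g h : esmap C A, related l r f g -> related l r g h -> related l r f h).

Definition is_symmetry (A At : ES) (l r : esmap At A) : Prop :=
  open_map l /\ open_map r /\ jointly_monic l r /\ equiv_rel l r.

Record ESS : Type := mkESS {
  base :> ES;
  symE : ES;
  sl : esmap symE base;
  sr : esmap symE base;
  sym_ok : is_symmetry sl sr
}.

Definition lifts (C Ct D Dt : ES) (lC rC : esmap Ct C) (lD rD : esmap Dt D)
  (f : esmap C D) (ft : esmap Ct Dt) : Prop :=
  forall e, lD (ft e) = f (lC e) /\ rD (ft e) = f (rC e).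
Definition has_lift (C Ct D Dt : ES) (lC rC : esmap Ct C) (lD rD : esmap Dt D)
  (f : esmap C D) : Prop :=
  exists ft : esmap Ct Dt, lifts lC rC lD rD f ft.

Definition in_iso (A : ESS) (th : ev A -> ev A -> Prop) : Prop :=
  exists xt, config xt /\
    forall a b, th a b <-> exists e, xt e /\ sl A e = a /\ sr A e = b.

(** Event structures with symmetry and polarity (true = +, false = -);
    polarity is preserved by symmetry. *)
Record ESSP : Type := mkESSP {
  ess :> ESS;
  pol : ev ess -> bool;
  pol_sym : forall e, pol (sl ess e) = pol (sr ess e)
}.
Arguments pol : clear implicits.

Definition dual (A : ESSP) : ESSP :=
  {| ess := ess A; pol := fun e => negb (pol A e);
     pol_sym := fun e => f_equal negb (@pol_sym A e) |}.

Definition pre_strategy (S A : ESSP) (s : esmap S A) (st : esmap (symE S) (symE A)) : Prop :=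
  lifts (sl S) (sr S) (sl A) (sr A) s st /\ forall e, pol A (s e) = pol S e.

Definition courteous (S A : ESSP) (s : esmap S A) : Prop :=
  forall s1 s2, imm s1 s2 -> (pol S s1 = true \/ pol S s2 = false) ->
    imm (s s1) (s s2).

Definition image2 {X Y : Type} (f : X -> Y) (th : X -> X -> Prop) : Y -> Y -> Prop :=
  fun a b => exists x1 x2, th x1 x2 /\ f x1 = a /\ f x2 = b.

Definition strong_receptive (S A : ESSP) (s : esmap S A) : Prop :=
  forall th : ev S -> ev S -> Prop, in_iso (A := S) th ->
  forall a1 a2 : ev A,
    in_iso (A := A) (image2 s th) ->
    ~ (exists b, image2 s th a1 b) ->
    in_iso (A := A) (fun a b => image2 s th a b \/ (a = a1 /\ b = a2)) ->
    pol A a1 = false -> pol A a2 = false ->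
    exists s1 s2,
      (~ (exists b, th s1 b) /\
       in_iso (A := S) (fun x y => th x y \/ (x = s1 /\ y = s2)) /\
       s s1 = a1 /\ s s2 = a2) /\
      forall t1 t2,
        ~ (exists b, th t1 b) ->
        in_iso (A := S) (fun x y => th x y \/ (x = t1 /\ y = t2)) ->
        s t1 = a1 -> s t2 = a2 -> t1 = s1 /\ t2 = s2.

Definition is_pullback (X Y Z P : ES) (f : esmap X Z) (g : esmap Y Z)
  (p1 : esmap P X) (p2 : esmap P Y) : Prop :=
  (forall e, f (p1 e) = g (p2 e)) /\
  forall (C : ES) (h1 : esmap C X) (h2 : esmap C Y),
    (forall c, f (h1 c) = g (h2 c)) ->
    exists k : esmap C P,
      ((forall c, p1 (k c) = h1 c) /\ (forall c, p2 (k c) = h2 c)) /\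
      forall k' : esmap C P,
        (forall c, p1 (k' c) = h1 c) -> (forall c, p2 (k' c) = h2 c) ->
        forall c, k' c = k c.

Definition ess_pullback (A S T : ESS) (s : esmap S A) (t : esmap T A)
  (P Pt : ES) (lP rP : esmap Pt P) (p1 : esmap P S) (p2 : esmap P T) : Prop :=
  is_symmetry lP rP /\
  has_lift lP rP (sl S) (sr S) p1 /\
  has_lift lP rP (sl T) (sr T) p2 /\
  (forall e, s (p1 e) = t (p2 e)) /\
  forall (C : ESS) (g : esmap C S) (h : esmap C T),
    has_lift (sl C) (sr C) (sl S) (sr S) g ->
    has_lift (sl C) (sr C) (sl T) (sr T) h ->
    (forall c, s (g c) = t (h c)) ->
    exists k : esmap C P,
      (has_lift (sl C) (sr C) lP rP k /\
       (forall c, p1 (k c) = g c) /\ (forall c, p2 (k c) = h c)) /\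
      forall k' : esmap C P,
        has_lift (sl C) (sr C) lP rP k' ->
        (forall c, p1 (k' c) = g c) -> (forall c, p2 (k' c) = h c) ->
        forall c, k' c = k c.

(* Main.v *)
Require Import Defs.
From Stdlib Require Import List Classical ClassicalEpsilon ProofIrrelevance Relation_Operators Lia.
Set Implicit Arguments.
Unset Strict Implicit.

Lemma finite_ext {E} (X Y : E -> Prop) : finite X -> (forall e, X e <-> Y e) -> finite Y.
Proof. intros [l Hl] H. exists l. intro e. rewrite <- H. apply Hl. Qed.

Lemma finite_sub {E} (X Y : E -> Prop) : finite X -> (forall e, Y e -> X e) -> finite Y.
Proof.
  intros [l Hl] H.
  exists (filter (fun e => if excluded_middle_informative (Y e) then true else false) l).
  intro e. rewrite filter_In. destruct (excluded_middle_informative (Y e)); split; intros.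
  - split; [apply Hl; auto | reflexivity].
  - auto.
  - contradiction.
  - destruct H0; discriminate.
Qed.

Lemma finite_add {E} (X : E -> Prop) d : finite X -> finite (fun e => X e \/ e = d).
Proof.
  intros [l Hl]. exists (d :: l). intro e. simpl. rewrite <- Hl. intuition.
Qed.

Lemma finite_image {A B} (f : A -> B) X : finite X -> finite (image f X).
Proof.
  intros [l Hl]. exists (map f l). intro b. rewrite in_map_iff. unfold image.
  split; intros [a [H1 H2]]; exists a; split; try apply Hl; auto.
Qed.

Lemma config_ext (E : ES) (X Y : ev E -> Prop) :
  config X -> (forall e, X e <-> Y e) -> config Y.
Proof.
  intros [Hf [Hc Hd]] H. split; [|split].
  - eapply finite_ext; eauto.
  - eapply con_sub; eauto. intros e He; apply H; auto.
  - intros e e' H1 H2. apply H. apply H in H1. eauto.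
Qed.

Lemma config_fin (E : ES) (X : ev E -> Prop) : config X -> finite X.
Proof. intros [H _]; auto. Qed.
Lemma config_con (E : ES) (X : ev E -> Prop) : config X -> con X.
Proof. intros [_ [H _]]; auto. Qed.
Lemma config_down (E : ES) (X : ev E -> Prop) : config X ->
  forall e e', X e' -> le e e' -> X e.
Proof. intros [_ [_ H]]; eauto. Qed.

Lemma prime_config (E : ES) (e : ev E) : config (fun u => le u e).
Proof.
  split; [apply le_fin|split].
  - destruct (le_fin e) as [l Hl].
    assert (forall l', (forall u, In u l' -> le u e) -> con (fun u => u = e \/ In u l')).
    { induction l' as [|a l' IH]; intros Hl'.
      - eapply con_sub. apply (con_single e). intros u [Hu|Hu]; auto; destruct Hu.
      - eapply con_sub. eapply con_down. apply IH. intros; apply Hl'; simpl; auto.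
        left; reflexivity. apply Hl'; simpl; auto.
        intros u [Hu|[Hu|Hu]]; simpl; auto. }
    eapply con_sub. apply (H l). intros; apply Hl; auto.
    intros u Hu. right. apply Hl; auto.
  - intros. eapply le_trans; eauto.
Qed.

Lemma esmap_reflect (X Y : ES) (f : esmap X Y) x d d' :
  config x -> x d -> x d' -> le (f d) (f d') -> le d d'.
Proof.
  intros Hx Hd Hd' Hle.
  assert (Hp : config (fun u => le u d')).
  { split; [apply le_fin|split].
    - eapply con_sub. apply (config_con Hx). intros u Hu. eapply config_down; eauto.
    - intros; eapply le_trans; eauto. }
  pose proof (fn_conf f Hp) as Hi.
  assert (image f (fun u => le u d') (f d)).
  { eapply config_down. apply Hi. exists d'. split; auto. apply le_refl. auto. }
  destruct H as [d'' [H1 H2]].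
  assert (d'' = d). { eapply (@fn_inj _ _ f _ Hx); eauto. eapply config_down; eauto. }
  subst; auto.
Qed.

Definition ecomp {A B C : ES} (g : esmap B C) (f : esmap A B) : esmap A C.
Proof.
  refine (@mkEsmap A C (fun a => g (f a)) _ _).
  - intros x Hx. apply config_ext with (image g (image f x)).
    + apply fn_conf, fn_conf, Hx.
    + intro c; unfold image; split.
      * intros [b [[a [Ha Hab]] Hbc]]; exists a; subst; auto.
      * intros [a [Ha Hac]]; exists (f a); split; [exists a; auto|auto].
  - intros x Hx e1 e2 H1 H2 H. apply (@fn_inj _ _ f _ Hx); auto.
    apply (@fn_inj _ _ g _ (fn_conf f Hx)); [exists e1 | exists e2 |]; auto.
Defined.

Lemma ecomp_eq {A B C : ES} (g : esmap B C) (f : esmap A B) a : ecomp g f a = g (f a).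
Proof. reflexivity. Qed.

Lemma sig_eq {T} (Q : T -> Prop) (a b : sig Q) : proj1_sig a = proj1_sig b -> a = b.
Proof.
  destruct a as [a Ha], b as [b Hb]; simpl; intro; subst. f_equal. apply proof_irrelevance.
Qed.

Lemma fin_sig_all {T} (Q : T -> Prop) : finite Q -> exists l : list (sig Q), forall a, In a l.
Proof.
  intros [l Hl].
  exists (flat_map (fun b => match excluded_middle_informative (Q b) with
                             | left H => exist Q b H :: nil | right _ => nil end) l).
  intro a. apply in_flat_map. exists (proj1_sig a). split.
  - apply Hl, proj2_sig.
  - destruct (excluded_middle_informative (Q (proj1_sig a))) as [H|H].
    + left. apply sig_eq. reflexivity.
    + exfalso; apply H, proj2_sig.
Qed.

Lemma fin_sig {T} (Q : T -> Prop) : finite Q -> forall X : sig Q -> Prop, finite X.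
Proof.
  intros HQ X. destruct (fin_sig_all HQ) as [l Hl].
  apply finite_sub with (fun _ => True). exists l; intuition. auto.
Qed.

Section Sub.
Variables (E : ES) (Q : ev E -> Prop) (HQ : finite Q) (ord : sig Q -> sig Q -> Prop).
Hypothesis ord_refl : forall a, ord a a.
Hypothesis ord_trans : forall a b c, ord a b -> ord b c -> ord a c.
Hypothesis ord_le : forall a b, ord a b -> le (proj1_sig a) (proj1_sig b).

Definition subES : ES.
Proof.
  refine (@mkES (sig Q) ord (fun X => con (image (@proj1_sig _ _) X)) ord_refl ord_trans _ _ _ _ _ _ _).
  - intros a b H1 H2. apply sig_eq. apply le_antisym; auto.
  - intros; apply fin_sig; auto.
  - intros; apply fin_sig; auto.
  - eapply con_sub. apply con_empty. intros u [a [[] _]].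
  - intros a. eapply con_sub. apply (con_single (proj1_sig a)). intros u [b [Hb Hu]]. subst; auto.
  - intros X Y H1 H2. eapply con_sub. apply H1. intros u [b [Hb Hu]]. exists b; auto.
  - intros X a b H1 H2 H3. eapply con_sub. eapply con_down. apply H1.
    exists b; split; eauto. apply ord_le; eauto.
    intros u [c [[Hc|Hc] Hu]]; subst. left; exists c; auto. right; auto.
Defined.

Lemma sub_config_from (y : ev E -> Prop) :
  config y -> (forall e, y e -> Q e) -> config (E := subES) (fun a => y (proj1_sig a)).
Proof.
  intros Hy HyQ. split; [apply fin_sig; auto|split].
  - simpl. eapply con_sub. apply (config_con Hy). intros u [a [Ha Hu]]; subst; auto.
  - simpl. intros a b Hb Hab. eapply config_down; eauto.
Qed.

Lemma sub_config_full (y : ev E -> Prop) :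
  config y -> (forall e, y e <-> Q e) -> config (E := subES) (fun _ => True).
Proof.
  intros Hy H. eapply config_ext. apply (sub_config_from Hy). intros; apply H; auto.
  intros a; split; auto. intros _. apply H, proj2_sig.
Qed.

End Sub.

Definition subR (E : ES) (Q : ev E -> Prop) (HQ : finite Q) : ES :=
  @subES E Q HQ (fun a b => le (proj1_sig a) (proj1_sig b))
     (fun a => le_refl _) (fun a b c => @le_trans _ _ _ _) (fun a b H => H).

Lemma subR_config_to (E : ES) (Q : ev E -> Prop) (HQ : finite Q)
  (Hd : forall e e', Q e' -> le e e' -> Q e) c :
  config (E := subR HQ) c -> config (image (@proj1_sig _ _) c).
Proof.
  intros Hc. split; [|split].
  - apply finite_image, (config_fin Hc).
  - apply (config_con Hc).
  - intros e e' [b [Hb Hbe]] Hle. subst.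
    exists (exist Q e (Hd _ _ (proj2_sig b) Hle)). split; auto.
    eapply (config_down Hc); eauto.
Qed.

Definition inclS (E : ES) (Q : ev E -> Prop) (HQ : finite Q)
  (Hd : forall e e', Q e' -> le e e' -> Q e) : esmap (subR HQ) E.
Proof.
  refine (@mkEsmap (subR HQ) E (@proj1_sig _ _) _ _).
  - apply subR_config_to; auto.
  - intros; apply sig_eq; auto.
Defined.

Definition cores (D E : ES) (Q : ev E -> Prop) (HQ : finite Q) (f : esmap D E)
  (Hf : forall x, Q (f x)) : esmap D (subR HQ).
Proof.
  refine (@mkEsmap D (subR HQ) (fun x => exist Q (f x) (Hf x)) _ _).
  - intros x Hx. pose proof (fn_conf f Hx) as Hi. split; [apply fin_sig; auto|split].
    + simpl. eapply con_sub. apply (config_con Hi). intros u [a [[b [Hb Hab]] Hu]]; subst.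
      exists b; auto.
    + simpl. intros a b [y [Hy Hyb]] Hab. subst. simpl in Hab.
      assert (image f x (proj1_sig a)) as [y' [Hy' Hya]].
      { eapply config_down; eauto. exists y; auto. }
      exists y'. split; auto. apply sig_eq; auto.
  - intros x Hx e1 e2 H1 H2 H. apply (@fn_inj _ _ f _ Hx); auto.
    apply (f_equal (@proj1_sig _ _)) in H. exact H.
Defined.

Definition pairs (X : ESS) (z : ev (symE X) -> Prop) (a b : ev X) : Prop :=
  exists e, z e /\ sl X e = a /\ sr X e = b.
Arguments pairs X z a b : clear implicits.

Lemma sym_open_l (X : ESS) : open_map (sl X).
Proof. apply (sym_ok X). Qed.
Lemma sym_rigid_l (X : ESS) : rigid (sl X).
Proof. apply (sym_ok X). Qed.
Lemma sym_monic (X : ESS) (C : ES) (f g : esmap C (symE X)) :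
  (forall c, sl X (f c) = sl X (g c)) -> (forall c, sr X (f c) = sr X (g c)) -> forall c, f c = g c.
Proof. intros. apply (proj1 (proj2 (proj2 (sym_ok X)))); auto. Qed.
Lemma sym_equiv (X : ESS) : equiv_rel (sl X) (sr X).
Proof. apply (sym_ok X). Qed.

Lemma swap_sym (A At : ES) (l r : esmap At A) : is_symmetry l r -> is_symmetry r l.
Proof.
  intros [H1 [H2 [H3 H4]]]. split; [auto|split; [auto|split]].
  - intros C g h Hr Hl. apply H3; auto.
  - intros C. destruct (H4 C) as [R [Sy Tr]]. split; [|split].
    + intros f. destruct (R f) as [k Hk]. exists k. intro c; split; apply Hk.
    + intros f g [k Hk]. assert (Hgf : related l r g f) by (exists k; intro c; split; apply Hk).
      destruct (Sy _ _ Hgf) as [k' Hk']. exists k'; intro c; split; apply Hk'.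
    + intros f g h Hfg Hgh.
      assert (related l r g f) as Hgf. { destruct Hfg as [k Hk]; exists k; intro c; split; apply Hk. }
      assert (related l r h g) as Hhg. { destruct Hgh as [k Hk]; exists k; intro c; split; apply Hk. }
      destruct (Tr _ _ _ Hhg Hgf) as [k Hk]. exists k. intro c; split; apply Hk.
Qed.

Definition swapESS (X : ESS) : ESS := @mkESS (base X) (symE X) (sr X) (sl X) (swap_sym (sym_ok X)).
Definition swapP (X : ESSP) : ESSP :=
  @mkESSP (swapESS X) (pol X) (fun e => eq_sym (@pol_sym X e)).

Lemma in_iso_ext (X : ESS) (r1 r2 : ev X -> ev X -> Prop) :
  in_iso r1 -> (forall a b, r1 a b <-> r2 a b) -> in_iso r2.
Proof.
  intros [xt [Hc H]] He. exists xt; split; auto. intros a b. rewrite <- He. apply H.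
Qed.

Lemma in_iso_swap (X : ESS) th : in_iso (A := swapESS X) th -> in_iso (A := X) th.
Proof.
  intros [xt [Hxt Hth]]. simpl in Hth.
  pose (C := subR (config_fin Hxt)).
  pose (i := inclS (config_fin Hxt) (config_down Hxt)).
  destruct (sym_equiv X C) as [_ [Sy _]].
  destruct (Sy (ecomp (sl X) i) (ecomp (sr X) i)) as [k Hk].
  { exists i. intro; split; reflexivity. }
  exists (image k (fun _ => True)). split.
  - apply fn_conf. eapply sub_config_full. apply Hxt. intuition.
  - intros a b. rewrite Hth. split.
    + intros [e [He [H1 H2]]]. exists (k (exist _ e He)). split. exists (exist _ e He); auto.
      destruct (Hk (exist _ e He)) as [K1 K2]. rewrite K1, K2. simpl. auto.
    + intros [e [[c [_ Hc]] [H1 H2]]]. subst. exists (proj1_sig c). split. apply proj2_sig.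
      destruct (Hk c) as [K1 K2]. rewrite K1, K2. simpl. auto.
Qed.

Lemma in_iso_swap' (X : ESS) th : in_iso (A := X) th -> in_iso (A := swapESS X) th.
Proof. intros H. apply (in_iso_swap (X := swapESS X)). exact H. Qed.

Lemma sr_swap (S A : ESSP) (s : esmap S A) :
  strong_receptive s -> strong_receptive (S := swapP S) (A := swapP A) s.
Proof.
  intros H th Hth a1 a2 H1 H2 H3 P1 P2.
  destruct (H th (in_iso_swap Hth) a1 a2 (in_iso_swap H1) H2 (in_iso_swap H3) P1 P2)
    as [s1 [s2 [[K1 [K2 [K3 K4]]] U]]].
  exists s1, s2. split. split; auto. split; auto. apply in_iso_swap'; auto.
  intros t1 t2 J1 J2 J3 J4. apply U; auto. apply in_iso_swap; auto.
Qed.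

Lemma ps_swap (S A : ESSP) (s : esmap S A) st :
  pre_strategy s st -> pre_strategy (S := swapP S) (A := swapP A) s st.
Proof.
  intros [H1 H2]. split; auto. intro e; simpl; split; apply H1.
Qed.

Lemma id_iso (X : ESS) (c : ev X -> Prop) : config c ->
  exists i, config i /\ forall a b, pairs X i a b <-> (c a /\ a = b).
Proof.
  intros Hc. pose (C := subR (config_fin Hc)).
  pose (j := inclS (config_fin Hc) (config_down Hc)).
  destruct (sym_equiv X C) as [R _]. destruct (R j) as [k Hk].
  exists (image k (fun _ => True)). split.
  - apply fn_conf. eapply sub_config_full. apply Hc. intuition.
  - intros a b; split.
    + intros [e [[u [_ Hu]] [H1 H2]]]. subst. destruct (Hk u) as [K1 K2]. rewrite K1, K2.
      split; [apply (proj2_sig u)|auto].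
    + intros [Ha Hab]; subst b. exists (k (exist _ a Ha)). split. exists (exist _ a Ha); auto.
      destruct (Hk (exist _ a Ha)) as [K1 K2]. rewrite K1, K2; auto.
Qed.

Lemma open_pairs (X : ESS) (w0 : ev (symE X) -> Prop) t :
  config w0 -> config (fun u => image (sl X) w0 u \/ u = t) -> ~ image (sl X) w0 t ->
  exists z s2, config z /\ forall a b, pairs X z a b <-> (pairs X w0 a b \/ (a = t /\ b = s2)).
Proof.
  intros Hw Hc Hn. destruct (sym_open_l X) as [_ Ho].
  destruct (Ho w0 _ Hw Hc) as [z [Hz [Hsub Hsame]]]. { intros u Hu; left; auto. }
  destruct (proj2 (Hsame t) (or_intror eq_refl)) as [u [Hu Hut]].
  exists z, (sr X u). split; auto. intros a b; split.
  - intros [e [He [H1 H2]]]. destruct (proj1 (Hsame a) (ex_intro _ e (conj He H1))) as [[e0 [He0 H0]]|Ha].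
    + left. assert (e = e0). { apply (@fn_inj _ _ (sl X) _ Hz); auto. congruence. }
      subst. exists e0; auto.
    + right. subst. split; auto. f_equal. apply (@fn_inj _ _ (sl X) _ Hz); auto.
  - intros [[e [He [H1 H2]]]|[H1 H2]].
    + exists e; auto.
    + subst; exists u; auto.
Qed.

Lemma iso_img (A0 U : ESS) (f : esmap U A0) ft
  (Hf : lifts (sl U) (sr U) (sl A0) (sr A0) f ft) (i : ev (symE U) -> Prop) r :
  config i -> (forall a b, pairs U i a b <-> r a b) -> in_iso (A := A0) (image2 f r).
Proof.
  intros Hi Hr. exists (image ft i). split. apply fn_conf; auto.
  intros a b. split.
  - intros [x1 [x2 [Hx [E1 E2]]]]. apply Hr in Hx. destruct Hx as [e [He [H1 H2]]].
    exists (ft e). split. exists e; auto. destruct (Hf e) as [K1 K2]. rewrite K1, K2. subst; auto.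
  - intros [e [[e0 [He0 He]] [H1 H2]]]. subst. destruct (Hf e0) as [K1 K2].
    exists (sl U e0), (sr U e0). split. apply Hr. exists e0; auto. auto.
Qed.

Lemma image2_union {X Y} (f : X -> Y) (r : X -> X -> Prop) s s' a b :
  image2 f (fun a b => r a b \/ (a = s /\ b = s')) a b <-> (image2 f r a b \/ (a = f s /\ b = f s')).
Proof.
  split.
  - intros [x1 [x2 [[H|[H1 H2]] [E1 E2]]]]; subst. left; exists x1, x2; auto. right; auto.
  - intros [[x1 [x2 [H [E1 E2]]]]|[E1 E2]]. exists x1, x2; auto. exists s, s'; subst; auto.
Qed.

Lemma iso_img_ext (A0 U : ESS) (f : esmap U A0) ft
  (Hf : lifts (sl U) (sr U) (sl A0) (sr A0) f ft) (i : ev (symE U) -> Prop) r s s' :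
  config i -> (forall a b, pairs U i a b <-> (r a b \/ (a = s /\ b = s'))) ->
  in_iso (A := A0) (fun a b => image2 f r a b \/ (a = f s /\ b = f s')).
Proof.
  intros Hi Hr. eapply in_iso_ext.
  apply (iso_img Hf (r := fun a b => r a b \/ (a = s /\ b = s')) Hi Hr).
  intros; apply image2_union.
Qed.

Lemma image_sl_pairs (X : ESS) w a : image (sl X) w a <-> exists b, pairs X w a b.
Proof.
  split. intros [e [He H]]; exists (sr X e), e; auto.
  intros [b [e [He [H1 H2]]]]; exists e; auto.
Qed.

Lemma recept (A' T : ESSP) (tau : esmap T A') taut
  (Hl : lifts (sl T) (sr T) (sl A') (sr A') tau taut) (Hr : strong_receptive tau)
  (w0 : ev (symE T) -> Prop) t a' :
  config w0 -> config (fun u => image (sl T) w0 u \/ u = t) -> ~ image (sl T) w0 t ->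
  in_iso (A := A') (fun a b => image2 tau (pairs T w0) a b \/ (a = tau t /\ b = a')) ->
  pol A' (tau t) = false -> pol A' a' = false ->
  exists w t2, config w /\ (forall a b, pairs T w a b <-> (pairs T w0 a b \/ (a = t /\ b = t2)))
    /\ tau t2 = a'.
Proof.
  intros Hw0 Hc Hn HzA P1 P2.
  set (c := image (sl T) w0) in *.
  assert (Hcc : config c) by (apply fn_conf; auto).
  assert (Hinj : forall u, c u -> tau u = tau t -> False).
  { intros u Hu Heq. apply Hn.
    assert (u = t) by (apply (@fn_inj _ _ tau _ Hc u t (or_introl Hu) (or_intror eq_refl) Heq)).
    subst; auto. }
  set (th := pairs T w0).
  assert (Hth : in_iso (A := T) th). { exists w0; split; auto. intros; unfold th, pairs; tauto. }
  assert (Himg : in_iso (A := A') (image2 tau th)).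
  { apply (iso_img Hl (r := th) Hw0). intros; unfold th; tauto. }
  assert (Hnd : ~ exists b, image2 tau th (tau t) b).
  { intros [b [x1 [x2 [Hx [E1 E2]]]]]. apply (Hinj x1).
    apply (proj2 (image_sl_pairs _ _)). exists x2; auto. auto. }
  destruct (Hr th Hth (tau t) a' Himg Hnd HzA P1 P2) as [r1 [r2 [[K1 [K2 [K3 K4]]] U1]]].
  destruct K2 as [w1 [Hw1 Hw1r]].
  destruct (id_iso Hcc) as [i0 [Hi0 Hi0r]].
  destruct (id_iso Hc) as [i1 [Hi1 Hi1r]].
  set (th0 := fun a b => c a /\ a = b).
  assert (Hth0 : in_iso (A:=T) th0).
  { exists i0; split; auto. intros a b. unfold th0. rewrite <- Hi0r. reflexivity. }
  assert (Himg0 : in_iso (A := A') (image2 tau th0)).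
  { apply (iso_img Hl (r := th0) Hi0). exact Hi0r. }
  assert (Hnd0 : ~ exists b, image2 tau th0 (tau t) b).
  { intros [b [x1 [x2 [[Hx _] [E1 E2]]]]]. apply (Hinj x1 Hx E1). }
  assert (Hext0 : in_iso (A := A') (fun a b => image2 tau th0 a b \/ (a = tau t /\ b = tau t))).
  { apply (iso_img_ext Hl (r := th0) Hi1). intros a b; rewrite Hi1r; unfold th0; split.
    - intros [[H|H] E]; subst; auto.
    - intros [[H E]|[E1 E2]]; subst; auto. }
  destruct (Hr th0 Hth0 (tau t) (tau t) Himg0 Hnd0 Hext0 P1 P1) as [r1' [r2' [_ U2]]].
  assert (Et : t = r1').
  { apply (U2 t t).
    - intros [b [Hb _]]. apply Hn; auto.
    - exists i1; split; auto. intros a b.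
      transitivity ((c a \/ a = t) /\ a = b).
      + unfold th0; split; [intros [[H E]|[E1 E2]]; subst; auto | intros [[H|H] E]; subst; auto].
      + rewrite <- Hi1r; reflexivity.
    - reflexivity.
    - reflexivity. }
  assert (Hcr : config (fun u => c u \/ u = r1)).
  { eapply config_ext. apply (fn_conf (sl T) Hw1). intro u. rewrite image_sl_pairs. split.
    - intros [b Hb]. apply Hw1r in Hb. destruct Hb as [Hb|[E _]].
      left. apply image_sl_pairs; eauto. right; auto.
    - intros [Hu|Hu].
      + apply image_sl_pairs in Hu. destruct Hu as [b Hb]. exists b. apply Hw1r. left; auto.
      + exists r2. apply Hw1r. right; auto. }
  destruct (id_iso Hcr) as [i2 [Hi2 Hi2r]].
  assert (Er : r1 = r1').
  { apply (U2 r1 r1).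
    - intros [b [Hb _]]. apply K1. apply image_sl_pairs in Hb. exact Hb.
    - exists i2; split; auto. intros a b.
      transitivity ((c a \/ a = r1) /\ a = b).
      + unfold th0; split; [intros [[H E]|[E1 E2]]; subst; auto | intros [[H|H] E]; subst; auto].
      + rewrite <- Hi2r; reflexivity.
    - auto.
    - auto. }
  subst r1'. subst r1.
  exists w1, r2. split; auto. split; auto.
  intros a b. split; intro H; [apply Hw1r in H | apply Hw1r]; auto.
Qed.

Lemma exists_min (E : ES) (l : list (ev E)) : forall (D : ev E -> Prop),
  (forall d, D d -> In d l) -> forall d0, D d0 ->
  exists m, D m /\ forall d, D d -> le d m -> d = m.
Proof.
  induction l as [|a l IH]; intros D HD d0 Hd0.
  - destruct (HD d0 Hd0).
  - destruct (classic (exists d, D d /\ d <> a)) as [[d1 [Hd1 Hne]]|Hno].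
    + destruct (IH (fun d => D d /\ d <> a)) with d1 as [m [[Hm Hma] Hmin]]; auto.
      { intros d [Hd Hda]. destruct (HD d Hd); auto. congruence. }
      destruct (classic (D a /\ le a m)) as [[Ha Ham]|Hn].
      * exists a. split; auto. intros d Hd Hda.
        destruct (classic (d = a)) as [|Hne']; auto.
        assert (d = m) by (apply Hmin; auto; eapply le_trans; eauto). subst d.
        apply le_antisym; auto.
      * exists m. split; auto. intros d Hd Hdm.
        destruct (classic (d = a)) as [E'|Hne']. subst. exfalso; apply Hn; auto.
        apply Hmin; auto.
    + exists d0. split; auto. intros d Hd _.
      assert (d = a) by (apply NNPP; intro; apply Hno; eauto).
      assert (d0 = a) by (apply NNPP; intro; apply Hno; eauto). congruence.
Qed.

Lemma lift_map (C Y Z : ES) (f : esmap C Y) (l : esmap Z Y) (Hr : rigid l)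
  (z : ev Z -> Prop) (Hz : config z) (Hf : forall a, exists e, z e /\ l e = f a)
  (Hinj : forall a b, f a = f b -> a = b) :
  exists h : esmap C Z, forall a, z (h a) /\ l (h a) = f a.
Proof.
  pose (h := fun a => proj1_sig (constructive_indefinite_description _ (Hf a))).
  assert (Hh : forall a, z (h a) /\ l (h a) = f a).
  { intro a. unfold h. destruct (constructive_indefinite_description _ _); auto. }
  unshelve eexists (@mkEsmap C Z h _ _); [| |exact Hh].
  - intros c Hc. split; [|split].
    + apply finite_image, (config_fin Hc).
    + eapply con_sub. apply (config_con Hz). intros w [a [_ Hw]]. subst. apply Hh.
    + intros w w' [b [Hb Hbw]] Hle. subst w'.
      assert (Hzw : z w) by (eapply (config_down Hz); [apply Hh|exact Hle]).
      pose proof (Hr _ _ Hle) as Hle'. rewrite (proj2 (Hh b)) in Hle'.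
      assert (Hfi : image f c (l w)).
      { eapply config_down. apply (fn_conf f Hc). exists b; split; auto. exact Hle'. }
      destruct Hfi as [a [Ha Hfa]]. exists a. split; auto.
      apply (@fn_inj _ _ l _ Hz); auto. apply Hh. rewrite (proj2 (Hh a)). auto.
  - intros c Hc e1 e2 H1 H2 H. apply Hinj. rewrite <- (proj2 (Hh e1)), <- (proj2 (Hh e2)), H. reflexivity.
Qed.

Section Open.
Variables (A S T : ESSP) (sg : esmap S A) (sgt : esmap (symE S) (symE A))
  (tau : esmap T (dual A)) (taut : esmap (symE T) (symE (dual A))).
Hypotheses (Hsg : pre_strategy sg sgt) (Hsg_r : strong_receptive sg)
  (Htau : pre_strategy tau taut) (Htau_r : strong_receptive tau).
Variables (P : ES) (p1 : esmap P S) (p2 : esmap P T).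
Hypothesis HP : is_pullback (Z := base A) sg tau p1 p2.
Variables (Pt : ES) (q1 : esmap Pt (symE S)) (q2 : esmap Pt (symE T)).
Hypothesis HPt : is_pullback (Z := symE A) sgt taut q1 q2.
Variable lP : esmap Pt P.
Hypothesis HlP : forall e, p1 (lP e) = sl S (q1 e) /\ p2 (lP e) = sl T (q2 e).

Lemma P_ext (C : ES) (u v : esmap C P) :
  (forall c, p1 (u c) = p1 (v c)) -> (forall c, p2 (u c) = p2 (v c)) -> forall c, u c = v c.
Proof.
  intros H1 H2 c. destruct HP as [Hc Hu].
  destruct (Hu C (ecomp p1 u) (ecomp p2 u)) as [k [_ Hk]].
  { intro x; simpl; apply Hc. }
  rewrite (Hk u (fun _ => eq_refl) (fun _ => eq_refl)).
  rewrite (Hk v); [reflexivity| intros; simpl; symmetry; auto | intros; simpl; symmetry; auto].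
Qed.

Lemma Pt_ext (C : ES) (u v : esmap C Pt) :
  (forall c, q1 (u c) = q1 (v c)) -> (forall c, q2 (u c) = q2 (v c)) -> forall c, u c = v c.
Proof.
  intros H1 H2 c. destruct HPt as [Hc Hu].
  destruct (Hu C (ecomp q1 u) (ecomp q2 u)) as [k [_ Hk]].
  { intro x; simpl; apply Hc. }
  rewrite (Hk u (fun _ => eq_refl) (fun _ => eq_refl)).
  rewrite (Hk v); [reflexivity| intros; simpl; symmetry; auto | intros; simpl; symmetry; auto].
Qed.

Lemma lP_rigid : rigid lP.
Proof.
  intros e e' Hle.
  set (Q := fun u => le u e').
  assert (HQ : finite Q) by apply le_fin.
  assert (HcQ : config Q) by apply prime_config.
  set (R := fun a b : sig Q => le (q1 (proj1_sig a)) (q1 (proj1_sig b)) \/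
                               le (q2 (proj1_sig a)) (q2 (proj1_sig b))).
  set (ord := clos_refl_trans (sig Q) R).
  assert (Hord : forall a b, ord a b -> le (proj1_sig a) (proj1_sig b)).
  { intros a b H. induction H as [a b H| a | a b c _ IH1 _ IH2].
    - destruct H as [H|H].
      + apply (esmap_reflect (f := q1) HcQ (proj2_sig a) (proj2_sig b) H).
      + apply (esmap_reflect (f := q2) HcQ (proj2_sig a) (proj2_sig b) H).
    - apply le_refl.
    - eapply le_trans; eauto. }
  set (C := @subES Pt Q HQ ord (fun a => rt_refl _ _ a) (fun a b c => rt_trans _ _ a b c) Hord).
  assert (Hmap : forall (Z : ES) (f : esmap Pt Z),
            (forall a b, le (f (proj1_sig a)) (f (proj1_sig b)) -> ord a b) ->
            { g : esmap C Z | forall a, g a = f (proj1_sig a) }).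
  { intros Z f Hf. unshelve eexists (@mkEsmap C Z (fun a => f (proj1_sig a)) _ _); [| |reflexivity].
    - intros x Hx. split; [|split].
      + apply finite_image. apply (config_fin Hx).
      + eapply con_sub. apply (config_con (fn_conf f HcQ)). intros w [a [Ha Hw]].
        exists (proj1_sig a). split; [apply proj2_sig | auto].
      + intros w w' [b [Hb Hbw]] Hww. subst w'.
        assert (Hw' : image f Q w).
        { eapply config_down. apply (fn_conf f HcQ). exists (proj1_sig b); split; [apply proj2_sig|reflexivity]. auto. }
        destruct Hw' as [u [Hu Huw]].
        exists (exist Q u Hu). split; auto. eapply (config_down Hx). exact Hb. apply Hf. simpl. rewrite Huw. auto.
    - intros x Hx e1 e2 H1 H2 H. apply sig_eq. apply (@fn_inj _ _ f _ HcQ); auto; apply proj2_sig. }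
  destruct (Hmap _ q1 (fun a b H => rt_step _ _ _ _ (or_introl H))) as [c1 Hc1].
  destruct (Hmap _ q2 (fun a b H => rt_step _ _ _ _ (or_intror H))) as [c2 Hc2].
  destruct HPt as [HPc HPu].
  destruct (HPu C c1 c2) as [k [[Hk1 Hk2] _]]. { intro a; rewrite Hc1, Hc2; apply HPc. }
  set (C' := subR HQ).
  assert (j : { j : esmap C' C | forall a, j a = a }).
  { unshelve eexists (@mkEsmap C' C (fun a => a) _ _); [| |reflexivity].
    - intros x Hx. split; [apply fin_sig; auto|split].
      + eapply con_sub. apply (config_con Hx). intros w Hw. destruct Hw as [b [Hb E]]; subst; auto.
      + intros a b [b' [Hb' E]] Hab. subst. exists a. split; auto.
        apply (config_down Hx Hb'). apply Hord. auto.
    - intros; auto. }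
  destruct j as [j Hj].
  set (i := inclS HQ (config_down HcQ)).
  assert (Hki : forall a, k a = proj1_sig a).
  { intro a. transitivity (k (j a)). rewrite Hj; reflexivity.
    refine (Pt_ext (u := ecomp k j) (v := i) _ _ a).
    - intro x. simpl. rewrite Hk1, Hc1, Hj. reflexivity.
    - intro x. simpl. rewrite Hk2, Hc2, Hj. reflexivity. }
  set (a0 := exist Q e' (le_refl e')).
  set (Dn := fun a => ord a a0).
  assert (HDn : config (E := C) Dn).
  { split; [apply fin_sig; auto | split].
    - change (con (e0:=Pt) (image (@proj1_sig _ _) Dn)).
      eapply con_sub. apply (config_con HcQ). intros w [a [_ Hw]]. subst. apply proj2_sig.
    - intros a b Hb Hab. unfold Dn. eapply rt_trans; eauto. }
  pose proof (fn_conf k HDn) as Hi.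
  assert (Hke : image k Dn e).
  { eapply config_down. apply Hi. exists a0. split. apply rt_refl. rewrite Hki. reflexivity. exact Hle. }
  destruct Hke as [a [Ha Hae]].
  rewrite Hki in Hae. subst e.
  assert (Hgen : forall a b, ord a b -> le (lP (proj1_sig a)) (lP (proj1_sig b))).
  { intros x y H. induction H as [x y H| x | x y z _ IH1 _ IH2].
    - pose proof (fn_conf lP HcQ) as HI.
      destruct H as [H|H].
      + pose proof (sym_rigid_l (X:=S) H) as H'.
        rewrite <- (proj1 (HlP (proj1_sig x))), <- (proj1 (HlP (proj1_sig y))) in H'.
        apply (esmap_reflect (f := p1) HI); auto.
        exists (proj1_sig x); split; auto; apply proj2_sig.
        exists (proj1_sig y); split; auto; apply proj2_sig.
      + pose proof (sym_rigid_l (X:=T) H) as H'.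
        rewrite <- (proj2 (HlP (proj1_sig x))), <- (proj2 (HlP (proj1_sig y))) in H'.
        apply (esmap_reflect (f := p2) HI); auto.
        exists (proj1_sig x); split; auto; apply proj2_sig.
        exists (proj1_sig y); split; auto; apply proj2_sig.
    - apply le_refl.
    - eapply le_trans; eauto. }
  apply (Hgen a a0 Ha).
Qed.

Lemma LS e : sl A (sgt e) = sg (sl S e) /\ sr A (sgt e) = sg (sr S e).
Proof. exact (proj1 Hsg e). Qed.
Lemma LT e : sl A (taut e) = tau (sl T e) /\ sr A (taut e) = tau (sr T e).
Proof. exact (proj1 Htau e). Qed.
Lemma LP e : sg (p1 e) = tau (p2 e).
Proof. exact (proj1 HP e). Qed.
Lemma LPt e : sgt (q1 e) = taut (q2 e).
Proof. exact (proj1 HPt e). Qed.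

Lemma stepB (x : ev Pt -> Prop) d s2 t2 z w :
  config x -> ~ image lP x d -> config (fun u => image lP x u \/ u = d) ->
  config z -> config w ->
  (forall a b, pairs S z a b <-> ((exists e, x e /\ sl S (q1 e) = a /\ sr S (q1 e) = b) \/ (a = p1 d /\ b = s2))) ->
  (forall a b, pairs T w a b <-> ((exists e, x e /\ sl T (q2 e) = a /\ sr T (q2 e) = b) \/ (a = p2 d /\ b = t2))) ->
  sg s2 = tau t2 ->
  exists x', config x' /\ subset x x' /\ same_set (image lP x') (fun u => image lP x u \/ u = d).
Proof.
  intros Hx Hnd HY Hz Hw Hzr Hwr Hst.
  set (Y := fun u => image lP x u \/ u = d) in *.
  assert (HYf : finite Y) by apply (config_fin HY).
  set (C := subR HYf).
  set (iY := inclS HYf (config_down HY)).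
  assert (Hp1i : forall a b : ev C, ecomp p1 iY a = ecomp p1 iY b -> a = b).
  { intros a b H. apply sig_eq. apply (@fn_inj _ _ p1 _ HY); auto; apply proj2_sig. }
  assert (Hp2i : forall a b : ev C, ecomp p2 iY a = ecomp p2 iY b -> a = b).
  { intros a b H. apply sig_eq. apply (@fn_inj _ _ p2 _ HY); auto; apply proj2_sig. }
  assert (Hex1 : forall a : ev C, exists e, z e /\ sl S e = ecomp p1 iY a).
  { intro a. simpl. destruct (proj2_sig a) as [[ep [Hep Hepa]]|Hd].
    - destruct (proj2 (Hzr (sl S (q1 ep)) (sr S (q1 ep)))) as [e [He [E1 E2]]].
      left; exists ep; auto.
      exists e; split; auto. rewrite E1, <- Hepa. symmetry; apply (proj1 (HlP ep)).
    - destruct (proj2 (Hzr (p1 d) s2)) as [e [He [E1 E2]]]. right; auto.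
      exists e; split; auto. rewrite E1, Hd. reflexivity. }
  assert (Hex2 : forall a : ev C, exists e, w e /\ sl T e = ecomp p2 iY a).
  { intro a. simpl. destruct (proj2_sig a) as [[ep [Hep Hepa]]|Hd].
    - destruct (proj2 (Hwr (sl T (q2 ep)) (sr T (q2 ep)))) as [e [He [E1 E2]]].
      left; exists ep; auto.
      exists e; split; auto. rewrite E1, <- Hepa. symmetry; apply (proj2 (HlP ep)).
    - destruct (proj2 (Hwr (p2 d) t2)) as [e [He [E1 E2]]]. right; auto.
      exists e; split; auto. rewrite E1, Hd. reflexivity. }
  destruct (lift_map (sym_rigid_l (X:=S)) Hz Hex1 Hp1i) as [h1 Hh1].
  destruct (lift_map (sym_rigid_l (X:=T)) Hw Hex2 Hp2i) as [h2 Hh2].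
  assert (Hsr1 : forall a ep, x ep -> proj1_sig a = lP ep -> sr S (h1 a) = sr S (q1 ep)).
  { intros a ep Hep Ha. destruct (Hh1 a) as [Hz1 Hl1].
    destruct (proj1 (Hzr _ _) (ex_intro _ (h1 a) (conj Hz1 (conj eq_refl eq_refl))))
      as [[ep' [Hep' [E1 E2]]]|[E1 E2]].
    - rewrite <- E2. f_equal. apply (@fn_inj _ _ (sl S) _ (fn_conf q1 Hx)).
      exists ep'; auto. exists ep; auto.
      rewrite E1, Hl1. simpl. rewrite Ha. apply (proj1 (HlP ep)).
    - exfalso. apply Hnd. rewrite Hl1 in E1. simpl in E1.
      assert (Had : proj1_sig a = d).
      { apply (@fn_inj _ _ p1 _ HY); auto; [apply proj2_sig | right; reflexivity]. }
      rewrite <- Had, Ha. exists ep; auto. }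
  assert (Hsr2 : forall a ep, x ep -> proj1_sig a = lP ep -> sr T (h2 a) = sr T (q2 ep)).
  { intros a ep Hep Ha. destruct (Hh2 a) as [Hz1 Hl1].
    destruct (proj1 (Hwr _ _) (ex_intro _ (h2 a) (conj Hz1 (conj eq_refl eq_refl))))
      as [[ep' [Hep' [E1 E2]]]|[E1 E2]].
    - rewrite <- E2. f_equal. apply (@fn_inj _ _ (sl T) _ (fn_conf q2 Hx)).
      exists ep'; auto. exists ep; auto.
      rewrite E1, Hl1. simpl. rewrite Ha. apply (proj2 (HlP ep)).
    - exfalso. apply Hnd. rewrite Hl1 in E1. simpl in E1.
      assert (Had : proj1_sig a = d).
      { apply (@fn_inj _ _ p2 _ HY); auto; [apply proj2_sig | right; reflexivity]. }
      rewrite <- Had, Ha. exists ep; auto. }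
  assert (Hsr1d : forall a, proj1_sig a = d -> sr S (h1 a) = s2).
  { intros a Ha. destruct (Hh1 a) as [Hz1 Hl1].
    destruct (proj1 (Hzr _ _) (ex_intro _ (h1 a) (conj Hz1 (conj eq_refl eq_refl))))
      as [[ep' [Hep' [E1 E2]]]|[E1 E2]]; auto.
    exfalso. apply Hnd. rewrite Hl1 in E1. simpl in E1. rewrite Ha, <- (proj1 (HlP ep')) in E1.
    assert (lP ep' = d).
    { apply (@fn_inj _ _ p1 _ HY); auto; [left; exists ep'; auto | right; reflexivity]. }
    exists ep'; auto. }
  assert (Hsr2d : forall a, proj1_sig a = d -> sr T (h2 a) = t2).
  { intros a Ha. destruct (Hh2 a) as [Hz1 Hl1].
    destruct (proj1 (Hwr _ _) (ex_intro _ (h2 a) (conj Hz1 (conj eq_refl eq_refl))))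
      as [[ep' [Hep' [E1 E2]]]|[E1 E2]]; auto.
    exfalso. apply Hnd. rewrite Hl1 in E1. simpl in E1. rewrite Ha, <- (proj2 (HlP ep')) in E1.
    assert (lP ep' = d).
    { apply (@fn_inj _ _ p2 _ HY); auto; [left; exists ep'; auto | right; reflexivity]. }
    exists ep'; auto. }
  assert (Hcm : forall a, sgt (h1 a) = taut (h2 a)).
  { apply (sym_monic (X := A) (f := ecomp sgt h1) (g := ecomp taut h2)).
    - intro a. simpl. rewrite (proj1 (LS (h1 a))).
      transitivity (tau (sl T (h2 a))); [| symmetry; apply (proj1 (LT _))].
      rewrite (proj2 (Hh1 a)), (proj2 (Hh2 a)). simpl. apply LP.
    - intro a. simpl. rewrite (proj2 (LS (h1 a))).
      transitivity (tau (sr T (h2 a))); [| symmetry; apply (proj2 (LT _))].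
      destruct (proj2_sig a) as [[ep [Hep Hepa]]|Hd].
      + rewrite (Hsr1 a ep Hep (eq_sym Hepa)), (Hsr2 a ep Hep (eq_sym Hepa)).
        rewrite <- (proj2 (LS _)). rewrite LPt. apply (proj2 (LT _)).
      + rewrite (Hsr1d a Hd), (Hsr2d a Hd). exact Hst. }
  destruct (proj2 HPt C h1 h2 Hcm) as [k [[Hk1 Hk2] _]].
  assert (HlPk : forall a, lP (k a) = proj1_sig a).
  { intro a. refine (P_ext (u := ecomp lP k) (v := iY) _ _ a).
    - intro b. simpl. rewrite (proj1 (HlP _)), Hk1, (proj2 (Hh1 b)). reflexivity.
    - intro b. simpl. rewrite (proj2 (HlP _)), Hk2, (proj2 (Hh2 b)). reflexivity. }
  assert (HXf : finite x) by apply (config_fin Hx).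
  set (ix := inclS HXf (config_down Hx)).
  assert (HmY : forall ep : ev (subR HXf), Y (ecomp lP ix ep)).
  { intro ep. left. exists (proj1_sig ep). split; [apply proj2_sig|reflexivity]. }
  set (m := cores (f := ecomp lP ix) HYf HmY).
  assert (Hkm : forall ep : ev (subR HXf), k (m ep) = proj1_sig ep).
  { assert (H1 : forall ep : ev (subR HXf), q1 (k (m ep)) = q1 (proj1_sig ep)).
    { apply (sym_monic (X := S) (f := ecomp q1 (ecomp k m)) (g := ecomp q1 ix)).
      - intro ep. simpl. rewrite Hk1, (proj2 (Hh1 _)). simpl. apply (proj1 (HlP _)).
      - intro ep. simpl. rewrite Hk1. apply (Hsr1 (m ep) (proj1_sig ep) (proj2_sig ep) eq_refl). }
    assert (H2 : forall ep : ev (subR HXf), q2 (k (m ep)) = q2 (proj1_sig ep)).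
    { apply (sym_monic (X := T) (f := ecomp q2 (ecomp k m)) (g := ecomp q2 ix)).
      - intro ep. simpl. rewrite Hk2, (proj2 (Hh2 _)). simpl. apply (proj2 (HlP _)).
      - intro ep. simpl. rewrite Hk2. apply (Hsr2 (m ep) (proj1_sig ep) (proj2_sig ep) eq_refl). }
    intro ep. exact (Pt_ext (u := ecomp k m) (v := ix) H1 H2 ep). }
  exists (image k (fun _ => True)). split; [|split].
  - apply fn_conf. eapply sub_config_full. apply HY. intuition.
  - intros ep Hep. exists (m (exist _ ep Hep)). split; [auto | apply Hkm].
  - intro u. split.
    + intros [e [[a [_ Ha]] He]]. subst. rewrite HlPk. apply proj2_sig.
    + intros Hu. exists (k (exist _ u Hu)). split. exists (exist _ u Hu); auto. apply HlPk.
Qed.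

Lemma img_eq (x : ev Pt -> Prop) a b :
  image2 sg (pairs S (image q1 x)) a b <-> image2 tau (pairs T (image q2 x)) a b.
Proof.
  split.
  - intros [x1 [x2 [[e [[ep [Hep E]] [E1 E2]]] [F1 F2]]]]. subst.
    exists (sl T (q2 ep)), (sr T (q2 ep)). split.
    + exists (q2 ep); split; [exists ep; auto| auto].
    + split.
      * rewrite <- (proj1 (LS _)), LPt. symmetry; apply (proj1 (LT _)).
      * rewrite <- (proj2 (LS _)), LPt. symmetry; apply (proj2 (LT _)).
  - intros [x1 [x2 [[e [[ep [Hep E]] [E1 E2]]] [F1 F2]]]]. subst.
    exists (sl S (q1 ep)), (sr S (q1 ep)). split.
    + exists (q1 ep); split; [exists ep; auto| auto].
    + split.
      * rewrite <- (proj1 (LS _)), LPt. apply (proj1 (LT _)).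
      * rewrite <- (proj2 (LS _)), LPt. apply (proj2 (LT _)).
Qed.

Lemma stepA (x : ev Pt -> Prop) d :
  config x -> ~ image lP x d -> config (fun u => image lP x u \/ u = d) ->
  exists z w s2 t2, config z /\ config w /\
  (forall a b, pairs S z a b <-> ((exists e, x e /\ sl S (q1 e) = a /\ sr S (q1 e) = b) \/ (a = p1 d /\ b = s2))) /\
  (forall a b, pairs T w a b <-> ((exists e, x e /\ sl T (q2 e) = a /\ sr T (q2 e) = b) \/ (a = p2 d /\ b = t2))) /\
  sg s2 = tau t2.
Proof.
  intros Hx Hnd HY.
  set (zx := image q1 x). set (wx := image q2 x).
  assert (Hzx : config zx) by (apply fn_conf; auto).
  assert (Hwx : config wx) by (apply fn_conf; auto).
  assert (Pz : forall a b, pairs S zx a b <-> exists e, x e /\ sl S (q1 e) = a /\ sr S (q1 e) = b).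
  { intros a b; split.
    - intros [e [[ep [Hep E]] [E1 E2]]]; subst; eauto.
    - intros [ep [Hep [E1 E2]]]. exists (q1 ep). split; auto. exists ep; auto. }
  assert (Pw : forall a b, pairs T wx a b <-> exists e, x e /\ sl T (q2 e) = a /\ sr T (q2 e) = b).
  { intros a b; split.
    - intros [e [[ep [Hep E]] [E1 E2]]]; subst; eauto.
    - intros [ep [Hep [E1 E2]]]. exists (q2 ep). split; auto. exists ep; auto. }
  assert (Hzc : config (fun u => image (sl S) zx u \/ u = p1 d)).
  { eapply config_ext. apply (fn_conf p1 HY). intro u. split.
    - intros [v [[Hv|Hv] Hvu]]; subst.
      + destruct Hv as [ep [Hep E]]; subst. left. exists (q1 ep). split. exists ep; auto.
        symmetry; apply (proj1 (HlP ep)).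
      + right; auto.
    - intros [[e [[ep [Hep E]] E']]|Hu]; subst.
      + exists (lP ep). split. left; exists ep; auto. apply (proj1 (HlP ep)).
      + exists d; split; [right; auto|auto]. }
  assert (Hwc : config (fun u => image (sl T) wx u \/ u = p2 d)).
  { eapply config_ext. apply (fn_conf p2 HY). intro u. split.
    - intros [v [[Hv|Hv] Hvu]]; subst.
      + destruct Hv as [ep [Hep E]]; subst. left. exists (q2 ep). split. exists ep; auto.
        symmetry; apply (proj2 (HlP ep)).
      + right; auto.
    - intros [[e [[ep [Hep E]] E']]|Hu]; subst.
      + exists (lP ep). split. left; exists ep; auto. apply (proj2 (HlP ep)).
      + exists d; split; [right; auto|auto]. }
  assert (Hzn : ~ image (sl S) zx (p1 d)).
  { intros [e [[ep [Hep E]] E']]; subst. apply Hnd. exists ep; split; auto.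
    apply (@fn_inj _ _ p1 _ HY); [left; exists ep; auto | right; auto | ].
    rewrite (proj1 (HlP ep)); exact E'. }
  assert (Hwn : ~ image (sl T) wx (p2 d)).
  { intros [e [[ep [Hep E]] E']]; subst. apply Hnd. exists ep; split; auto.
    apply (@fn_inj _ _ p2 _ HY); [left; exists ep; auto | right; auto | ].
    rewrite (proj2 (HlP ep)); exact E'. }
  destruct (pol S (p1 d)) eqn:Hpol.
  - destruct (open_pairs Hzx Hzc Hzn) as [z [s2 [Hz Hzr]]].
    assert (HzA : in_iso (A := dual A)
                    (fun a b => image2 tau (pairs T wx) a b \/ (a = tau (p2 d) /\ b = sg s2))).
    { eapply in_iso_ext. apply (iso_img_ext (f := sg) (proj1 Hsg) (r := pairs S zx) Hz Hzr).
      intros a b. unfold zx, wx. rewrite img_eq, LP. reflexivity. }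
    assert (P1 : pol (dual A) (tau (p2 d)) = false).
    { simpl. rewrite <- LP, (proj2 Hsg), Hpol. reflexivity. }
    assert (P2 : pol (dual A) (sg s2) = false).
    { destruct (proj2 (Hzr (p1 d) s2) (or_intror (conj eq_refl eq_refl))) as [e [_ [E1 E2]]].
      simpl. rewrite (proj2 Hsg), <- E2, <- (pol_sym e), E1, Hpol. reflexivity. }
    destruct (recept (proj1 Htau) Htau_r Hwx Hwc Hwn HzA P1 P2) as [w [t2 [Hw [Hwr Ht2]]]].
    exists z, w, s2, t2. split; auto. split; auto. split; [|split].
    + intros a b. rewrite Hzr, Pz. reflexivity.
    + intros a b. rewrite Hwr, Pw. reflexivity.
    + auto.
  - destruct (open_pairs Hwx Hwc Hwn) as [w [t2 [Hw Hwr]]].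
    assert (HzA : in_iso (A := A)
                    (fun a b => image2 sg (pairs S zx) a b \/ (a = sg (p1 d) /\ b = tau t2))).
    { eapply in_iso_ext. apply (iso_img_ext (f := tau) (proj1 Htau) (r := pairs T wx) Hw Hwr).
      intros a b. unfold zx, wx. rewrite img_eq, LP. reflexivity. }
    assert (P1 : pol A (sg (p1 d)) = false).
    { rewrite (proj2 Hsg), Hpol. reflexivity. }
    assert (P2 : pol A (tau t2) = false).
    { destruct (proj2 (Hwr (p2 d) t2) (or_intror (conj eq_refl eq_refl))) as [e [_ [E1 E2]]].
      assert (E : negb (pol A (tau t2)) = negb (pol A (tau (p2 d)))).
      { change (pol (dual A) (tau t2) = pol (dual A) (tau (p2 d))).
        rewrite !(proj2 Htau), <- E2, <- (pol_sym e), E1. reflexivity. }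
      rewrite <- LP, (proj2 Hsg), Hpol in E. simpl in E.
      apply Bool.negb_true_iff in E. exact E. }
    destruct (recept (proj1 Hsg) Hsg_r Hzx Hzc Hzn HzA P1 P2) as [z [s2 [Hz [Hzr Hs2]]]].
    exists z, w, s2, t2. split; auto. split; auto. split; [|split].
    + intros a b. rewrite Hzr, Pz. reflexivity.
    + intros a b. rewrite Hwr, Pw. reflexivity.
    + auto.
Qed.

Lemma lP_ext : forall (x : ev Pt -> Prop) (y' : ev P -> Prop), config x -> config y' ->
  subset (image lP x) y' ->
  exists y, config y /\ subset x y /\ same_set (image lP y) y'.
Proof.
  intros x y' Hx Hy' Hsub.
  destruct (config_fin Hy') as [l Hl].
  assert (Main : forall n (L : list (ev P)) x0, length L <= n -> config x0 ->
            subset (image lP x0) y' -> (forall d, y' d -> ~ image lP x0 d -> In d L) ->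
            exists y, config y /\ subset x0 y /\ same_set (image lP y) y').
  { induction n as [|n IH]; intros L x0 HL Hx0 Hs0 HLc;
      (destruct (classic (exists d0, y' d0 /\ ~ image lP x0 d0)) as [[d0 [Hd0 Hnd0]]|Hno];
       [| exists x0; split; auto; split; [intros e He; auto
            | intro u; split; [apply Hs0| intros Hu; apply NNPP; intro; apply Hno; eauto]]]).
    - destruct L; [destruct (HLc d0 Hd0 Hnd0) | simpl in HL; lia].
    - set (D := fun d => y' d /\ ~ image lP x0 d /\ le d d0).
      destruct (exists_min (l := L) (D := D)) with d0 as [m [[Hm1 [Hm2 Hm3]] Hmin]].
      { intros d [H1 [H2 _]]. apply HLc; auto. }
      { split; [auto|split; [auto|apply le_refl]]. }
      assert (HYm : config (fun u => image lP x0 u \/ u = m)).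
      { split; [|split].
        - apply finite_add, finite_image, (config_fin Hx0).
        - eapply con_sub. apply (config_con Hy'). intros u [Hu|Hu]; [apply Hs0; auto | subst; auto].
        - intros e e' [He'|He'] Hle.
          + left. eapply config_down. apply (fn_conf lP Hx0). exact He'. exact Hle.
          + subst e'. destruct (classic (image lP x0 e)) as [He|He]; [left; auto|right].
            apply Hmin; [|exact Hle].
            split; [eapply (config_down Hy'); eauto | split; [exact He | eapply le_trans; eauto]]. }
      destruct (stepA Hx0 Hm2 HYm) as [z [w [s2 [t2 [Hz [Hw [Hzr [Hwr Hst]]]]]]]].
      destruct (stepB Hx0 Hm2 HYm Hz Hw Hzr Hwr Hst) as [x' [Hx' [Hsx Hsame]]].
      pose (dec := fun a b : ev P => excluded_middle_informative (a = b)).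
      destruct (IH (remove dec m L) x') as [y [Hy [Hxy Hyy]]]; auto.
      + assert (length (remove dec m L) < length L).
        { apply remove_length_lt. apply HLc; auto. }
        lia.
      + intros u Hu. apply Hsame in Hu. destruct Hu as [Hu|Hu]; [apply Hs0; auto | subst; auto].
      + intros d Hd Hnd. apply in_in_remove.
        * intro E; subst. apply Hnd. apply Hsame. right; auto.
        * apply HLc; auto. intro Hd'. apply Hnd. apply Hsame. left; auto.
      + exists y. split; auto. split; auto. intros e He. apply Hxy, Hsx, He. }
  apply (Main (length l) l x); auto.
  intros d Hd _. apply Hl; auto.
Qed.

Lemma lP_open : open_map lP.
Proof. split. apply lP_rigid. apply lP_ext. Qed.

End Open.

Theorem mainTheorem10
  (A S T : ESSP)
  (sg : esmap S A) (sgt : esmap (symE S) (symE A))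
  (tau : esmap T (dual A)) (taut : esmap (symE T) (symE (dual A)))
  (Hsg : pre_strategy sg sgt) (Hsg_c : courteous sg) (Hsg_r : strong_receptive sg)
  (Htau : pre_strategy tau taut) (Htau_c : courteous tau) (Htau_r : strong_receptive tau)
  (P : ES) (p1 : esmap P S) (p2 : esmap P T)
  (HP : is_pullback (Z := base A) sg tau p1 p2)
  (Pt : ES) (q1 : esmap Pt (symE S)) (q2 : esmap Pt (symE T))
  (HPt : is_pullback (Z := symE A) sgt taut q1 q2)
  (lP rP : esmap Pt P)
  (HlP : forall e, p1 (lP e) = sl S (q1 e) /\ p2 (lP e) = sl T (q2 e))
  (HrP : forall e, p1 (rP e) = sr S (q1 e) /\ p2 (rP e) = sr T (q2 e)) :
  ess_pullback (A := A) sg tau lP rP p1 p2 /\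
  lifts lP rP (sl S) (sr S) p1 q1 /\ lifts lP rP (sl T) (sr T) p2 q2.
Proof.
  assert (LS : forall e, sl A (sgt e) = sg (sl S e) /\ sr A (sgt e) = sg (sr S e)) by exact (proj1 Hsg).
  assert (LT : forall e, sl A (taut e) = tau (sl T e) /\ sr A (taut e) = tau (sr T e)) by exact (proj1 Htau).
  assert (LP : forall e, sg (p1 e) = tau (p2 e)) by exact (proj1 HP).
  assert (Pt_mk : forall (C : ES) (f g : esmap C P) (k1 : esmap C (symE S)) (k2 : esmap C (symE T)),
    (forall c, sl S (k1 c) = p1 (f c)) -> (forall c, sr S (k1 c) = p1 (g c)) ->
    (forall c, sl T (k2 c) = p2 (f c)) -> (forall c, sr T (k2 c) = p2 (g c)) ->
    exists K : esmap C Pt, forall c, lP (K c) = f c /\ rP (K c) = g c).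
  { intros C f g k1 k2 H1 H2 H3 H4.
    assert (Hc : forall c, sgt (k1 c) = taut (k2 c)).
    { apply (sym_monic (X := A) (f := ecomp sgt k1) (g := ecomp taut k2)).
      - intro c. simpl. rewrite (proj1 (LS _)), H1, LP.
        transitivity (tau (sl T (k2 c))); [| symmetry; apply (proj1 (LT _))]. rewrite H3; auto.
      - intro c. simpl. rewrite (proj2 (LS _)), H2, LP.
        transitivity (tau (sr T (k2 c))); [| symmetry; apply (proj2 (LT _))]. rewrite H4; auto. }
    destruct (proj2 HPt C k1 k2 Hc) as [K [[K1 K2] _]].
    exists K. intro c. split.
    - refine (P_ext HP (u := ecomp lP K) (v := f) _ _ c).
      + intro x; simpl. rewrite (proj1 (HlP _)), K1; auto.
      + intro x; simpl. rewrite (proj2 (HlP _)), K2; auto.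
    - refine (P_ext HP (u := ecomp rP K) (v := g) _ _ c).
      + intro x; simpl. rewrite (proj1 (HrP _)), K1; auto.
      + intro x; simpl. rewrite (proj2 (HrP _)), K2; auto. }
  assert (RS : forall C (f g : esmap C P), related lP rP f g ->
            related (sl S) (sr S) (ecomp p1 f) (ecomp p1 g)).
  { intros C f g [k Hk]. exists (ecomp q1 k). intro c. simpl.
    rewrite <- (proj1 (HlP _)), <- (proj1 (HrP _)). destruct (Hk c) as [E1 E2]. rewrite E1, E2; auto. }
  assert (RT : forall C (f g : esmap C P), related lP rP f g ->
            related (sl T) (sr T) (ecomp p2 f) (ecomp p2 g)).
  { intros C f g [k Hk]. exists (ecomp q2 k). intro c. simpl.
    rewrite <- (proj2 (HlP _)), <- (proj2 (HrP _)). destruct (Hk c) as [E1 E2]. rewrite E1, E2; auto. }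
  assert (RP : forall C (f g : esmap C P),
            related (sl S) (sr S) (ecomp p1 f) (ecomp p1 g) ->
            related (sl T) (sr T) (ecomp p2 f) (ecomp p2 g) -> related lP rP f g).
  { intros C f g [k1 Hk1] [k2 Hk2].
    destruct (Pt_mk C f g k1 k2) as [K HK]; try (intro c; apply Hk1); try (intro c; apply Hk2).
    exists K; auto. }
  split; [split; [|split; [|split; [|split]]] | split].
  -
    split; [|split; [|split]].
    + exact (lP_open Hsg Hsg_r Htau Htau_r HP HPt HlP).
    + exact (@lP_open (swapP A) (swapP S) (swapP T) sg sgt tau taut
               (ps_swap Hsg) (sr_swap Hsg_r) (ps_swap Htau) (sr_swap Htau_r)
               P p1 p2 HP Pt q1 q2 HPt rP HrP).
    + intros C g h Hl Hr c.
      refine (Pt_ext HPt (u := g) (v := h) _ _ c).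
      * apply (sym_monic (X := S) (f := ecomp q1 g) (g := ecomp q1 h)); intro x; simpl.
        rewrite <- !(proj1 (HlP _)), Hl; auto.
        rewrite <- !(proj1 (HrP _)), Hr; auto.
      * apply (sym_monic (X := T) (f := ecomp q2 g) (g := ecomp q2 h)); intro x; simpl.
        rewrite <- !(proj2 (HlP _)), Hl; auto.
        rewrite <- !(proj2 (HrP _)), Hr; auto.
    + intro C. destruct (sym_equiv S C) as [RS1 [RS2 RS3]].
      destruct (sym_equiv T C) as [RT1 [RT2 RT3]].
      split; [|split].
      * intro f. apply RP; auto.
      * intros f g H. apply RP; [apply RS2, RS, H | apply RT2, RT, H].
      * intros f g h H1 H2. apply RP.
        -- apply (RS3 _ (ecomp p1 g)); apply RS; auto.
        -- apply (RT3 _ (ecomp p2 g)); apply RT; auto.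
  - exists q1. intro e. split; symmetry; [apply (proj1 (HlP e)) | apply (proj1 (HrP e))].
  - exists q2. intro e. split; symmetry; [apply (proj2 (HlP e)) | apply (proj2 (HrP e))].
  - exact (proj1 HP).
  - intros C g h [gt Hgt] [ht Hht] Hc.
    destruct (proj2 HP C g h Hc) as [k [[Hk1 Hk2] Hku]].
    exists k. split; [split; [|split; auto]|].
    + destruct (Pt_mk (symE C) (ecomp k (sl C)) (ecomp k (sr C)) gt ht) as [K HK].
      * intro c; simpl. rewrite Hk1. apply Hgt.
      * intro c; simpl. rewrite Hk1. apply Hgt.
      * intro c; simpl. rewrite Hk2. apply Hht.
      * intro c; simpl. rewrite Hk2. apply Hht.
      * exists K. intro e. apply HK.
    + intros k' _ H1 H2. apply Hku; auto.
  - intro e. split; symmetry; [apply (proj1 (HlP e)) | apply (proj1 (HrP e))].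
  - intro e. split; symmetry; [apply (proj2 (HlP e)) | apply (proj2 (HrP e))].
Qed.
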